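(* For every integer $n\ge 1$, the polytope \[Q_n=\sum_{i=0}^{n-1}\mathrm{conv}\{e_{3i+1}+e_{3i+3},\,e_{3i+2}+e_{3n+1}\}+\sum_{0\le i<j\le n-1}\mathrm{conv}\{e_{3i+1}+e_{3i+3}+e_{3j+2},\,e_{3i+2}+e_{3j+1}+e_{3j+3},\,e_{3i+2}+e_{3j+2}+e_{3n+1}\}\subseteq\mathbb{R}^{3n+1}\] is unimodularly equivalent to \[\overline{Q}_n=\sum_{S\in\mathcal{I}_n}\Delta_S\subseteq\mathbb{R}^{n+1}.\]
   Context: All sums of polytopes are Minkowski sums; $e_k$ denotes standard basis vectors. $Q_n$ is a state polytope for the toric ideal of the code $P(2_n)$. Let $\mathcal{I}_n=\{S\cup\{n+1\} : S\subseteq[n],\ |S|\in\{1,2\}\}$, and for $S\subseteq[n+1]$ let $\Delta_S=\mathrm{conv}\{e_i\in\mathbb{R}^{n+1}: i\in S\}$. Polytopes $P,P'\subseteq\mathbb{R}^m$ are unimodularly equivalent if $P'=MP+v$ with $M\in\mathrm{GL}_m(\mathbb{Z})$, $v\in\mathbb{Z}^m$; for $P\subseteq\mathbb{R}^N$, $P'\subseteq\mathbb{R}^m$ with $N>m$, this means $P$ is unimodularly equivalent to $P'\times\{0\}\subseteq\mathbb{R}^N$. *)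

(* Defs.v *)
From HB Require Import structures.
From mathcomp Require Import all_boot all_order all_algebra.
From mathcomp Require Import reals.
Set Implicit Arguments. Unset Strict Implicit. Unset Printing Implicit Defensive.
Import Order.TTheory GRing.Theory Num.Theory.
Local Open Scope ring_scope.

Definition pset (R : realType) (m : nat) := 'rV[R]_m -> Prop.

(* standard basis vector e_k, 1-indexed: e_k has a 1 at coordinate k (k in 1..m) *)
Definition ev (R : realType) (m k : nat) : 'rV[R]_m :=
  \row_(j < m) (if j.+1 == k then 1 else 0).

Definition conv (R : realType) (m : nat) (s : seq 'rV[R]_m) : pset R m :=
  fun x => exists w : 'I_(size s) -> R,
    (forall i, 0 <= w i) /\ \sum_i w i = 1 /\
    x = \sum_i w i *: s`_i.

Fixpoint msum (R : realType) (m : nat) (Ps : seq (pset R m)) : pset R m :=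
  match Ps with
  | [::] => fun x => x = 0
  | P :: Ps' => fun x => exists y z, P y /\ msum Ps' z /\ x = y + z
  end.

Definition Qn (R : realType) (n : nat) : pset R (3 * n).+1%N :=
  let e := @ev R (3 * n).+1%N in
  msum ([seq conv [:: e (3*i+1)%N + e (3*i+3)%N; e (3*i+2)%N + e (3*n+1)%N]
         | i <- iota 0 n] ++
        [seq conv [:: e (3*i+1)%N + e (3*i+3)%N + e (3*j+2)%N;
                      e (3*i+2)%N + e (3*j+1)%N + e (3*j+3)%N;
                      e (3*i+2)%N + e (3*j+2)%N + e (3*n+1)%N]
         | i <- iota 0 n, j <- iota i.+1 (n - i.+1)%N]).

Definition Delta (R : realType) (m : nat) (Sx : seq nat) : pset R m :=
  conv [seq @ev R m i | i <- Sx].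

(* I_n = { S u {n+1} : S subset [n], |S| in {1,2} } *)
Definition In_sets (n : nat) : seq (seq nat) :=
  [seq [:: a; n.+1] | a <- iota 1 n] ++
  [seq [:: a; b; n.+1] | a <- iota 1 n, b <- iota a.+1 (n - a)%N].

Definition Qbarn (R : realType) (n : nat) : pset R n.+1 :=
  msum [seq @Delta R n.+1 Sx | Sx <- In_sets n].

(* P' x {0} in R^N, for P' in R^m (m <= N) *)
Definition pad (R : realType) (m N : nat) (x : 'rV[R]_m) : 'rV[R]_N :=
  \row_(j < N) (if @insub nat (fun k => (k < m)%N) 'I_m (val j) is Some k then x 0 k else 0).

(* P (in R^N) is unimodularly equivalent to P' x {0} (P' in R^m, m < N):
   P' x {0} = M P + v with M in GL_N(Z), v in Z^N (row-vector convention). *)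
Definition unimod_equiv_lower (R : realType) (N m : nat)
    (P : pset R N) (P' : pset R m) : Prop :=
  exists (M : 'M[int]_N) (v : 'rV[int]_N),
    M \in unitmx /\
    forall y : 'rV[R]_N,
      (exists x', P' x' /\ y = pad N x') <->
      (exists x, P x /\ y = x *m map_mx (fun z : int => z%:~R) M
                              + map_mx (fun z : int => z%:~R) v).

(* Main.v *)
Require Import Defs.
From mathcomp Require Import all_boot all_order all_algebra.
From mathcomp Require Import reals.
From mathcomp Require Import zify ring.
Set Implicit Arguments. Unset Strict Implicit. Unset Printing Implicit Defensive.
Import Order.TTheory GRing.Theory Num.Theory.
Local Open Scope ring_scope.

Section Gen.
Variables (R : realType).

Definition convN m (s : seq 'rV[R]_m) (y : 'rV[R]_m) := exists w : nat -> R,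
  (forall i, (i < size s)%N -> 0 <= w i) /\ \sum_(0 <= i < size s) w i = 1 /\
  y = \sum_(0 <= i < size s) w i *: s`_i.

Lemma convE m (s : seq 'rV[R]_m) y : conv s y <-> convN s y.
Proof.
split.
- move=> [w [w0 [w1 ->]]].
  exists (fun i => if @insub nat (fun k => (k < size s)%N) 'I_(size s) i is Some o then w o else 0).
  split; [|split].
  + move=> i _; case: insub => [o|] //.
  + by rewrite big_mkord -w1; apply: eq_bigr => o _; rewrite valK.
  + by rewrite big_mkord; apply: eq_bigr => o _; rewrite valK.
- move=> [w [w0 [w1 ->]]].
  exists (fun o : 'I_(size s) => w o); split; [|split].
  + by move=> o; apply: w0.
  + by rewrite -w1 big_mkord.
  + by rewrite big_mkord.
Qed.

Definition img m m' (f : 'rV[R]_m' -> 'rV[R]_m) (P : pset R m') : pset R m :=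
  fun y => exists x, P x /\ y = f x.

Lemma conv_img m m' (f : 'rV[R]_m' -> 'rV[R]_m) (s : seq 'rV[R]_m') y :
  (forall a b, f (a + b) = f a + f b) -> (forall c a, f (c *: a) = c *: f a) ->
  img f (conv s) y <-> conv (map f s) y.
Proof.
move=> fD fZ.
have f0 : f 0 = 0.
  by rewrite -(scale0r 0) fZ scale0r.
have fS : forall (g : nat -> 'rV[R]_m') k, f (\sum_(0 <= i < k) g i) = \sum_(0 <= i < k) f (g i).
  by move=> g k; apply: (big_morph f fD f0).
rewrite convE; split.
- move=> [x [/convE [w [w0 [w1 ->]]] ->]].
  exists w; rewrite size_map; split; [by []|split; first by []].
  rewrite fS; apply: eq_big_nat => i /andP [_ hi].
  by rewrite fZ (nth_map 0).
- move=> [w []]; rewrite size_map => w0 [w1 ->].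
  exists (\sum_(0 <= i < size s) w i *: s`_i); split.
  + by apply/convE; exists w.
  + rewrite fS; apply: eq_big_nat => i /andP [_ hi].
    by rewrite fZ (nth_map 0).
Qed.

Lemma conv_shift m (s : seq 'rV[R]_m) w y :
  conv (map (fun p => p + w) s) y <-> conv s (y - w).
Proof.
rewrite !convE; split.
- move=> [a []]; rewrite size_map => a0 [a1 ->].
  exists a; split; [by []|split; first by []].
  rewrite (@eq_big_nat _ _ _ _ _ _ (fun i => a i *: s`_i + a i *: w)); last first.
    by move=> i /andP [_ hi]; rewrite (nth_map 0) // scalerDr.
  by rewrite big_split /= -scaler_suml a1 scale1r addrK.
- move=> [a [a0 [a1 e]]].
  exists a; rewrite size_map; split; [by []|split; first by []].
  rewrite (@eq_big_nat _ _ _ _ _ _ (fun i => a i *: s`_i + a i *: w)); last first.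
    by move=> i /andP [_ hi]; rewrite (nth_map 0) // scalerDr.
  by rewrite big_split /= -scaler_suml a1 scale1r -e subrK.
Qed.

End Gen.


Section Rel.
Variables (R : realType) (m m' : nat) (f : 'rV[R]_m' -> 'rV[R]_m).

Definition srel (P : pset R m') (G : pset R m) (w : 'rV[R]_m) :=
  forall y, img f P y <-> G (y - w).

Inductive mrel : seq (pset R m') -> seq (pset R m) -> 'rV[R]_m -> Prop :=
| mrel_nil : mrel [::] [::] 0
| mrel_cons P G w Ps Gs W : srel P G w -> mrel Ps Gs W -> mrel (P :: Ps) (G :: Gs) (w + W).

Lemma mrel_msum Ps Gs W : (forall a b, f (a + b) = f a + f b) -> f 0 = 0 ->
  mrel Ps Gs W -> forall y, img f (msum Ps) y <-> msum Gs (y - W).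
Proof.
move=> fD f0; elim => [|P G w Ps' Gs' W' hP _ IH] y /=.
- rewrite subr0; split; first by move=> [x [-> ->]].
  by move=> ->; exists 0.
- split.
  + move=> [x [[a [b [Pa [Pb ->]]]] ->]].
    exists (f a - w), (f b - W'); split; [|split].
    * by apply/hP; exists a.
    * by apply/IH; exists b.
    * by rewrite fD opprD addrACA.
  + move=> [c [d [Gc [Gd e]]]].
    have /hP [a [Pa ea]] : G (c + w - w) by rewrite addrK.
    have /IH [b [Pb eb]] : msum Gs' (d + W' - W') by rewrite addrK.
    exists (a + b); split; first by exists a, b.
    rewrite fD -ea -eb addrACA -e opprD addrA.
    by rewrite -opprD -addrA subrK.
Qed.

Lemma mrel_cat Ps Gs W Ps' Gs' W' : mrel Ps Gs W -> mrel Ps' Gs' W' ->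
  mrel (Ps ++ Ps') (Gs ++ Gs') (W + W').
Proof.
elim => [|P G w Ps1 Gs1 W1 hP _ IH] h /=; first by rewrite add0r.
by rewrite -addrA; apply: mrel_cons => //; apply: IH.
Qed.

Lemma mrel_map (I : eqType) (l : seq I) (F : I -> pset R m') (G : I -> pset R m) (w : I -> 'rV[R]_m) :
  (forall i, i \in l -> srel (F i) (G i) (w i)) ->
  mrel (map F l) (map G l) (\sum_(i <- l) w i).
Proof.
elim: l => [|i l IH] h /=; first by rewrite big_nil; constructor.
rewrite big_cons; constructor; first by apply: h; rewrite inE eqxx.
by apply: IH => j hj; apply: h; rewrite inE hj orbT.
Qed.

Lemma mrel_allpairs (I J : eqType) (s : seq I) (t : I -> seq J)
  (F : I -> J -> pset R m') (G : I -> J -> pset R m) (w : I -> J -> 'rV[R]_m) :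
  (forall i, i \in s -> forall j, j \in t i -> srel (F i j) (G i j) (w i j)) ->
  mrel (allpairs_dep F s t) (allpairs_dep G s t) (\sum_(i <- s) \sum_(j <- t i) w i j).
Proof.
elim: s => [|i s IH] h /=; first by rewrite big_nil; constructor.
rewrite big_cons; apply: mrel_cat.
  by apply: mrel_map => j hj; apply: h => //; rewrite inE eqxx.
by apply: IH => i' hi' j hj; apply: h => //; rewrite inE hi' orbT.
Qed.

End Rel.


Section Mats.
Variable T : pzRingType.

Definition ur (m j : nat) : 'rV[T]_m := \row_(l < m) ((l : nat) == j)%:R.
Definition Mx m (g : nat -> 'rV[T]_m) : 'M[T]_m := \matrix_(i, c) g i 0 c.

Lemma urM m j (A : 'M[T]_m) (hj : (j < m)%N) : ur m j *m A = row (Ordinal hj) A.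
Proof.
apply/rowP => c; rewrite !mxE (bigD1 (Ordinal hj)) //= !mxE eqxx mul1r big1 ?addr0 //.
move=> l hl; rewrite !mxE.
have -> : ((l : nat) == j) = false.
  by apply/negbTE; apply: contra hl => /eqP e; apply/eqP/val_inj.
by rewrite mul0r.
Qed.

Lemma row_Mx m (g : nat -> 'rV[T]_m) i : row i (Mx g) = g i.
Proof. by apply/rowP => c; rewrite !mxE; congr (g _ _ _); apply/val_inj; case: (0 : 'I_1) => [[]]. Qed.

Lemma urMx m j (g : nat -> 'rV[T]_m) : (j < m)%N -> ur m j *m Mx g = g j.
Proof. by move=> hj; rewrite urM row_Mx. Qed.

Lemma row1mx m (i : 'I_m) : row i (1%:M : 'M[T]_m) = ur m i.
Proof. by apply/rowP => c; rewrite !mxE eq_sym. Qed.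

Variable n : nat.
Notation N := (3 * n).+1%N.

Definition rowM (i : nat) : 'rV[T]_N :=
  if (i == 3 * n)%N then ur N n else
  if (i %% 3 == 0)%N then ur N ((i) %/ 3)%N - ur N (n + 1 + 2 * ((i) %/ 3)%N)%N + ur N (n + 2 + 2 * ((i) %/ 3)%N)%N
  else if (i %% 3 == 1)%N then ur N (n + 2 + 2 * ((i) %/ 3)%N)%N else ur N (n + 1 + 2 * ((i) %/ 3)%N)%N.

Definition rowN (j : nat) : 'rV[T]_N :=
  if (j < n)%N then ur N (3 * j)%N + ur N (3 * j + 2)%N - ur N (3 * j + 1)%N
  else if (j == n)%N then ur N (3 * n)%N
  else if ((j - n.+1) %% 2 == 0)%N then ur N (3 * ((j - n.+1) %/ 2) + 2)%N
  else ur N (3 * ((j - n.+1) %/ 2) + 1)%N.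

Lemma rowM_t : rowM (3 * n)%N = ur N n.
Proof. by rewrite /rowM eqxx. Qed.

Lemma rowM_a k : (k < n)%N -> rowM (3 * k)%N = ur N k - ur N (n + 1 + 2 * k)%N + ur N (n + 2 + 2 * k)%N.
Proof.
move=> hk; rewrite /rowM.
have -> : (3 * k == 3 * n) = false by lia.
have -> : ((3 * k) %% 3 = 0)%N by lia.
have -> : ((3 * k) %/ 3 = k)%N by lia.
by [].
Qed.

Lemma rowM_b k : (k < n)%N -> rowM (3 * k + 1)%N = ur N (n + 2 + 2 * k)%N.
Proof.
move=> hk; rewrite /rowM.
have -> : (3 * k + 1 == 3 * n) = false by lia.
have -> : ((3 * k + 1) %% 3 = 1)%N by lia.
have -> : ((3 * k + 1) %/ 3 = k)%N by lia.
by [].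
Qed.

Lemma rowM_c k : (k < n)%N -> rowM (3 * k + 2)%N = ur N (n + 1 + 2 * k)%N.
Proof.
move=> hk; rewrite /rowM.
have -> : (3 * k + 2 == 3 * n) = false by lia.
have -> : ((3 * k + 2) %% 3 = 2)%N by lia.
have -> : ((3 * k + 2) %/ 3 = k)%N by lia.
by [].
Qed.

Lemma rowN_a k : (k < n)%N -> rowN k = ur N (3 * k)%N + ur N (3 * k + 2)%N - ur N (3 * k + 1)%N.
Proof. by move=> hk; rewrite /rowN hk. Qed.

Lemma rowN_p k : rowN (n + 1 + 2 * k)%N = ur N (3 * k + 2)%N.
Proof.
rewrite /rowN.
have -> : (n + 1 + 2 * k < n)%N = false by lia.
have -> : (n + 1 + 2 * k == n) = false by lia.
have -> : ((n + 1 + 2 * k - n.+1) %% 2 = 0)%N by lia.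
have -> : ((n + 1 + 2 * k - n.+1) %/ 2 = k)%N by lia.
by [].
Qed.

Lemma rowN_q k : rowN (n + 2 + 2 * k)%N = ur N (3 * k + 1)%N.
Proof.
rewrite /rowN.
have -> : (n + 2 + 2 * k < n)%N = false by lia.
have -> : (n + 2 + 2 * k == n) = false by lia.
have -> : ((n + 2 + 2 * k - n.+1) %% 2 = 1)%N by lia.
have -> : ((n + 2 + 2 * k - n.+1) %/ 2 = k)%N by lia.
by [].
Qed.

Lemma rowN_t : rowN n = ur N (3 * n)%N.
Proof. by rewrite /rowN ltnn eqxx. Qed.

Lemma idx_cases i : (i < N)%N -> i = 3 * n \/ exists2 k, (k < n)%N &
  [\/ i = 3 * k, i = 3 * k + 1 | i = 3 * k + 2]%N.
Proof.
move=> hi; case: (ltnP i (3 * n)) => h; last by left; lia.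
right; exists ((i) %/ 3)%N; first by lia.
have : (i %% 3 < 3)%N by lia.
case e : ((i) %% 3)%N => [|[|[|r]]] _ //.
- by constructor 1; lia.
- by constructor 2; lia.
- by constructor 3; lia.
Qed.

Lemma MN1 : Mx rowM *m Mx rowN = 1%:M.
Proof.
apply/row_matrixP => i; rewrite row_mul row_Mx row1mx.
have hi := ltn_ord i.
case: (idx_cases hi) => [->|[k hk [->|->|->]]].
- by rewrite rowM_t urMx ?rowN_t //; lia.
- rewrite rowM_a // !mulmxDl !mulNmx !urMx; try lia.
  by rewrite rowN_a // rowN_p rowN_q (addrAC (_ + _)) subrK addrK.
- by rewrite rowM_b // urMx ?rowN_q //; lia.
- by rewrite rowM_c // urMx ?rowN_p //; lia.
Qed.

End Mats.


Section Real.
Variable R : realType.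

Lemma ev_urE m k j : k = j.+1 -> @ev R m k = ur R m j.
Proof. by move=> ->; apply/rowP => c; rewrite !mxE eqSS; case: (_ == _). Qed.

Lemma pad_ur m N j : (j < m)%N -> (m <= N)%N -> pad N (ur R m j) = ur R N j.
Proof.
move=> hj hm; apply/rowP => c; rewrite !mxE.
case: insubP => [o ho eo|ho]; first by rewrite mxE eo.
have -> : ((c : nat) == j) = false.
  by apply/negbTE/negP => /eqP e; move: ho => /=; rewrite e hj.
by [].
Qed.

Lemma padD m N (a b : 'rV[R]_m) : pad N (a + b) = pad N a + pad N b.
Proof. by apply/rowP => c; rewrite !mxE; case: insubP => [o _ _|_]; rewrite ?mxE ?addr0. Qed.

Lemma padZ m N c (a : 'rV[R]_m) : pad N (c *: a) = c *: pad N a.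
Proof. by apply/rowP => l; rewrite !mxE; case: insubP => [o _ _|_]; rewrite ?mxE ?mulr0. Qed.

Lemma pad0 m N : pad N (0 : 'rV[R]_m) = 0.
Proof. by apply/rowP => l; rewrite !mxE; case: insubP => [o _ _|_]; rewrite ?mxE. Qed.

Variable n : nat.
Notation N := (3 * n).+1%N.

Definition Lm (x : 'rV[R]_N) := x *m Mx (rowM R n).
Definition Gc (S : seq nat) : pset R N := conv (map (@pad R n.+1 N) (map (@ev R n.+1) S)).

Lemma LD a b : Lm (a + b) = Lm a + Lm b. Proof. exact: mulmxDl. Qed.
Lemma LZ c a : Lm (c *: a) = c *: Lm a. Proof. by rewrite /Lm -scalemxAl. Qed.
Lemma L0 : Lm 0 = 0. Proof. exact: mul0mx. Qed.

Lemma Lur j : (j < N)%N -> Lm (ur R N j) = rowM R n j.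
Proof. by move=> hj; rewrite /Lm urMx. Qed.

Lemma Gpad i : (i <= n)%N -> pad N (@ev R n.+1 i.+1) = ur R N i.
Proof. by move=> hi; rewrite (@ev_urE _ _ i) // pad_ur //; lia. Qed.

Lemma srel_shift (s : seq 'rV[R]_N) S w :
  map Lm s = map (fun p => p + w) (map (@pad R n.+1 N) (map (@ev R n.+1) S)) ->
  srel Lm (conv s) (Gc S) w.
Proof.
move=> e y; rewrite conv_img; [|exact: LD|exact: LZ].
by rewrite e conv_shift.
Qed.

Lemma srelA i : (i < n)%N ->
  srel Lm (conv [:: @ev R N (3*i+1)%N + @ev R N (3*i+3)%N; @ev R N (3*i+2)%N + @ev R N (3*n+1)%N])
    (Gc [:: i.+1; n.+1]) (ur R N (n + 2 + 2 * i)%N).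
Proof.
move=> hi; apply: srel_shift => /=.
rewrite (@ev_urE _ (3*i+1)%N (3*i)%N); last lia.
rewrite (@ev_urE _ (3*i+3)%N (3*i+2)%N); last lia.
rewrite (@ev_urE _ (3*i+2)%N (3*i+1)%N); last lia.
rewrite (@ev_urE _ (3*n+1)%N (3*n)%N); last lia.
rewrite !Gpad //; try lia.
rewrite !LD !Lur; try lia.
rewrite rowM_a // rowM_b // rowM_c // rowM_t.
by congr [:: _; _]; apply/rowP => c; rewrite !mxE; ring.
Qed.

Lemma srelB i j : (i < j)%N -> (j < n)%N ->
  srel Lm (conv [:: @ev R N (3*i+1)%N + @ev R N (3*i+3)%N + @ev R N (3*j+2)%N;
                   @ev R N (3*i+2)%N + @ev R N (3*j+1)%N + @ev R N (3*j+3)%N;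
                   @ev R N (3*i+2)%N + @ev R N (3*j+2)%N + @ev R N (3*n+1)%N])
    (Gc [:: i.+1; j.+1; n.+1]) (ur R N (n + 2 + 2 * i)%N + ur R N (n + 2 + 2 * j)%N).
Proof.
move=> hij hj; apply: srel_shift => /=.
rewrite (@ev_urE _ (3*i+1)%N (3*i)%N); last lia.
rewrite (@ev_urE _ (3*i+3)%N (3*i+2)%N); last lia.
rewrite (@ev_urE _ (3*i+2)%N (3*i+1)%N); last lia.
rewrite (@ev_urE _ (3*j+1)%N (3*j)%N); last lia.
rewrite (@ev_urE _ (3*j+3)%N (3*j+2)%N); last lia.
rewrite (@ev_urE _ (3*j+2)%N (3*j+1)%N); last lia.
rewrite (@ev_urE _ (3*n+1)%N (3*n)%N); last lia.
rewrite !Gpad //; try lia.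
rewrite !LD !Lur; try lia.
rewrite rowM_t (@rowM_a R n i) ?(@rowM_a R n j) ?rowM_b ?rowM_c //; try lia.
by congr [:: _; _; _]; apply/rowP => c; rewrite !mxE; ring.
Qed.

End Real.


Section Main.
Variables (R : realType) (n : nat).
Notation N := (3 * n).+1%N.

Definition FA (i : nat) : pset R N :=
  conv [:: @ev R N (3*i+1)%N + @ev R N (3*i+3)%N; @ev R N (3*i+2)%N + @ev R N (3*n+1)%N].
Definition FB (i j : nat) : pset R N :=
  conv [:: @ev R N (3*i+1)%N + @ev R N (3*i+3)%N + @ev R N (3*j+2)%N;
           @ev R N (3*i+2)%N + @ev R N (3*j+1)%N + @ev R N (3*j+3)%N;
           @ev R N (3*i+2)%N + @ev R N (3*j+2)%N + @ev R N (3*n+1)%N].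

Lemma Qn_eq : @Qn R n = msum (map FA (iota 0 n) ++
   allpairs_dep FB (iota 0 n) (fun i => iota i.+1 (n - i.+1))).
Proof. by []. Qed.

Lemma iS m k : iota m.+1 k = map S (iota m k).
Proof. by rewrite -add1n iotaDl; apply: eq_map => x; rewrite add1n. Qed.

Lemma In_eq : map (@Gc R n) (In_sets n) =
  map (fun i => @Gc R n [:: i.+1; n.+1]) (iota 0 n) ++
  allpairs_dep (fun i j => @Gc R n [:: i.+1; j.+1; n.+1]) (iota 0 n) (fun i => iota i.+1 (n - i.+1)).
Proof.
rewrite /In_sets map_cat; congr (_ ++ _).
  by rewrite iS -!map_comp.
rewrite iS; elim: (iota 0 n) => [|a l IH] //=.
by rewrite map_cat IH iS -!map_comp.
Qed.

Definition WR : 'rV[R]_N := \sum_(i <- iota 0 n) ur R N (n + 2 + 2 * i)%N +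
  \sum_(i <- iota 0 n) \sum_(j <- iota i.+1 (n - i.+1)) (ur R N (n + 2 + 2 * i)%N + ur R N (n + 2 + 2 * j)%N).
Definition WI : 'rV[int]_N := \sum_(i <- iota 0 n) ur int N (n + 2 + 2 * i)%N +
  \sum_(i <- iota 0 n) \sum_(j <- iota i.+1 (n - i.+1)) (ur int N (n + 2 + 2 * i)%N + ur int N (n + 2 + 2 * j)%N).

Lemma relL : mrel (@Lm R n) (map FA (iota 0 n) ++ allpairs_dep FB (iota 0 n) (fun i => iota i.+1 (n - i.+1)))
  (map (fun i => @Gc R n [:: i.+1; n.+1]) (iota 0 n) ++
   allpairs_dep (fun i j => @Gc R n [:: i.+1; j.+1; n.+1]) (iota 0 n) (fun i => iota i.+1 (n - i.+1)))
  WR.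
Proof.
apply: mrel_cat.
  apply: mrel_map => i; rewrite mem_iota => /andP [_ hi].
  by apply: srelA; lia.
apply: (mrel_allpairs (w := fun i j => ur R N (n + 2 + 2 * i)%N + ur R N (n + 2 + 2 * j)%N)).
move=> i; rewrite mem_iota => /andP [_ hi] j; rewrite mem_iota => /andP [h1 h2].
by apply: srelB; lia.
Qed.

End Main.


Section Fin.
Variables (R : realType) (n : nat).
Notation N := (3 * n).+1%N.
Notation ir := (fun z : int => z%:~R : R).

Lemma mapD a b (A B : 'M[int]_(a, b)) : map_mx ir (A + B) = map_mx ir A + map_mx ir B.
Proof. by apply/matrixP => i j; rewrite !mxE intrD. Qed.
Lemma mapN a b (A : 'M[int]_(a, b)) : map_mx ir (- A) = - map_mx ir A.
Proof. by apply/matrixP => i j; rewrite !mxE intrN. Qed.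
Lemma map0 a b : map_mx ir (0 : 'M[int]_(a, b)) = 0.
Proof. by apply/matrixP => i j; rewrite !mxE. Qed.
Lemma map_ur m j : map_mx ir (ur int m j) = ur R m j.
Proof. by apply/rowP => c; rewrite !mxE mulrz_nat. Qed.

Lemma map_rowM i : map_mx ir (rowM int n i) = rowM R n i.
Proof.
rewrite /rowM; case: ifP => _; first exact: map_ur.
case: ifP => _; first by rewrite !mapD mapN !map_ur.
by case: ifP => _; rewrite map_ur.
Qed.

Lemma map_M : map_mx ir (Mx (rowM int n)) = Mx (rowM R n).
Proof.
apply/matrixP => i c; rewrite !mxE.
by rewrite -map_rowM mxE.
Qed.

Lemma map_W : map_mx ir (WI n) = WR R n.
Proof.
rewrite /WI /WR mapD !(big_morph _ (@mapD _ _) (@map0 _ _)).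
congr (_ + _); apply: eq_bigr => i _.
  exact: map_ur.
rewrite !(big_morph _ (@mapD _ _) (@map0 _ _)).
by apply: eq_bigr => j _; rewrite mapD !map_ur.
Qed.

Lemma relP : mrel (@pad R n.+1 N) (map (@Delta R n.+1) (In_sets n)) (map (@Gc R n) (In_sets n)) 0.
Proof.
have -> : (0 : 'rV[R]_N) = \sum_(S <- In_sets n) 0 by rewrite big1.
apply: mrel_map => S _ y; rewrite subr0 /Delta conv_img //.
  exact: padD.
exact: padZ.
Qed.

End Fin.

Local Close Scope ring_scope.

Theorem mainTheorem9 (R : realType) (n : nat) :
  (1 <= n)%N -> unimod_equiv_lower (@Qn R n) (@Qbarn R n).
Proof.
move=> _.
exists (Mx (rowM int n)), (- WI n)%R; split.
  exact: (mulmx1_unit (MN1 int n)).1.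
move=> y.
rewrite map_M mapN map_W.
have h1 : (exists x', @Qbarn R n x' /\ y = pad (3 * n).+1%N x') <->
          img (@pad R n.+1 (3 * n).+1%N) (msum (map (@Delta R n.+1) (In_sets n))) y by [].
have h2 := mrel_msum (@padD _ _ _) (@pad0 _ _ _) (@relP R n) y.
rewrite subr0 In_eq in h2.
have h3 : (exists x, @Qn R n x /\ (y = x *m Mx (rowM R n) + - WR R n)%R) <->
          img (@Lm R n) (@Qn R n) (y + WR R n)%R.
  split => [[x [hx ->]]|[x [hx e]]]; exists x; split => //.
    by rewrite subrK.
  by rewrite -[(x *m _)%R]/(Lm x) -e addrK.
have h4 := mrel_msum (@LD _ _) (@L0 _ _) (@relL R n) (y + WR R n)%R.
rewrite addrK -Qn_eq in h4.
exact: iff_trans h1 (iff_trans h2 (iff_sym (iff_trans h3 h4))).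
Qed.
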